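(* For every even integer $n\ge4$, $\mu_n$-almost every choice function $\eta\in\mathscr{C}_n$ is random.
   Context: Let $\mathcal{A}_n=\{1,\dots,5n-6\}$, $\mathcal{A}_n^m$ the words of length $m$ over $\mathcal{A}_n$ ($\mathcal{A}_n^0=\{\varepsilon\}$), $\mathcal{A}_n^*=\bigcup_{m\ge0}\mathcal{A}_n^m$, $\mathcal{A}_n^{\mathbb{N}}$ the infinite words; for a word $w=i_1i_2\cdots$, $w(j)=i_1\cdots i_j$. For $u\in\mathcal{A}_n^j$ and $m\ge j$, $\mathcal{A}^m_{n,u}=\{v\in\mathcal{A}_n^m:v(j)=u\}$. $\nu_n$ is the probability measure on $\mathcal{A}_n^{\mathbb{N}}$ with $\nu_n(\{\tau:\tau(|u|)=u\})=(5n-6)^{-|u|}$ for all $u\in\mathcal{A}_n^*$. $\mathscr{C}_n$ is the set of choice functions $\eta:\mathcal{A}_n^*\to\{1,2\}$, i.e. $\{1,2\}^{\mathcal{A}_n^*}$, and $\mu_n$ is the product probability measure on it under which the values $\eta(u)$, $u\in\mathcal{A}_n^*$, are independent and each equals $1$ or $2$ with probability $1/2$. A choice function $\eta$ is random if for $\nu_n$-a.e. $w=i_1i_2\cdots\in\mathcal{A}_n^{\mathbb{N}}$ the following holds: for every $N\in\mathbb{N}$ and every integer $k\ge0$ there is an integer $\ell\ge N$ such that (R1) $\eta\equiv1$ on $\bigcup_{j=0}^{k-1}\mathcal{A}^{\ell+j}_{n,w(\ell)}$ and $\eta\equiv2$ on $\bigcup_{j=0}^{2N+k-1}\mathcal{A}^{\ell-N+j}_{n,w(\ell-N)}\setminus\bigcup_{j=0}^{k-1}\mathcal{A}^{\ell+j}_{n,w(\ell)}$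 (the first union being empty when $k=0$), and (R2) $i_{\ell-N+1}>4n-4$. *)

(* Defs.v *)
From HB Require Import structures.
From mathcomp Require Import all_boot all_order all_algebra.
From mathcomp Require Import all_classical all_reals all_analysis.
Set Implicit Arguments. Unset Strict Implicit. Unset Printing Implicit Defensive.
Import Order.TTheory GRing.Theory Num.Theory.
Local Open Scope classical_set_scope.

(* ordinals of positive size are pointed (needed for g_sigma_algebraType) *)
HB.instance Definition _ (k : nat) := isPointed.Build 'I_k.+1 ord0.
Local Open Scope ring_scope.

(* The alphabet A_n = {1,...,5n-6}.  For n >= 2 we have 5n-6 = (5n-7).+1, and
   the ordinal i : 'I_(5n-7).+1 represents the letter (val i).+1. *)
Notation alph n := ('I_(5 * n - 7).+1).
Definition letter_val (n : nat) (i : alph n) : nat := (val i).+1.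

Definition pref (n : nat) (w : nat -> alph n) (j : nat) : seq (alph n) :=
  mkseq w j.

Definition nu_gen (n : nat) : set (set (nat -> alph n)) :=
  [set A | exists u : seq (alph n), A = [set w | pref w (size u) = u]].
Notation wordsT n := (g_sigma_algebraType (@nu_gen n)).

(* choice functions eta : A_n^* -> {1,2}, encoded with true = 1, false = 2;
   product sigma-algebra generated by the coordinate events {eta u = b} *)
Definition mu_gen (n : nat) : set (set (seq (alph n) -> bool)) :=
  [set A | exists (u : seq (alph n)) (b : bool), A = [set eta | eta u = b]].
Notation choiceT n := (g_sigma_algebraType (@mu_gen n)).

Definition nu_cyl (n : nat) (R : realType) (nu : probability (wordsT n) R) :=
  forall u : seq (alph n),
    nu [set w : wordsT n | pref w (size u) = u] = (((5 * n - 6)%:R : R) ^- size u)%:E.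

Definition mu_cyl (n : nat) (R : realType) (mu : probability (choiceT n) R) :=
  forall (us : seq (seq (alph n))) (c : seq (alph n) -> bool), uniq us ->
    mu [set eta : choiceT n | forall u, u \in us -> eta u = c u]
      = (((2%:R : R)^-1) ^+ size us)%:E.

Definition in_union (n : nat) (w : nat -> alph n) (l k : nat) (v : seq (alph n)) :=
  (l <= size v < l + k)%N /\ take l v = pref w l.

Definition R1 (n : nat) (eta : seq (alph n) -> bool) (w : nat -> alph n) (N k l : nat) :=
  (forall v, in_union w l k v -> eta v = true) /\
  (forall v, in_union w (l - N) (2 * N + k) v -> ~ in_union w l k v -> eta v = false).
Definition R2 (n : nat) (w : nat -> alph n) (N l : nat) :=
  (4 * n - 4 < letter_val (w (l - N)))%N.

Definition is_random (n : nat) (R : realType) (nu : probability (wordsT n) R)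
    (eta : seq (alph n) -> bool) :=
  {ae nu, forall w : wordsT n, forall N k : nat,
      exists l : nat, (N <= l)%N /\ R1 eta w N k l /\ R2 w N l}.

(* Main.v *)
Require Import Defs.
From HB Require Import structures.
From mathcomp Require Import all_boot all_order all_algebra.
From mathcomp Require Import all_classical all_reals all_analysis.
From mathcomp Require Import measurable_realfun zify ring lra.
Import Order.TTheory GRing.Theory Num.Theory.
Local Open Scope classical_set_scope.

Section Words.
Variable n : nat.
Local Notation A := (alph n).

Fixpoint words (j : nat) : seq (seq A) :=
  if j is j'.+1 then [seq a :: s | a <- enum A, s <- words j'] else [:: [::]].

Lemma mem_words j s : (s \in words j) = (size s == j).
Proof.
elim: j s => [|j IH] [|a s] /=; try by rewrite inE.
- by apply/negbTE/negP => /allpairsP [[b t]] /= [_ _].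
- rewrite eqSS -IH; apply/allpairsP/idP.
  + by case=> [[b t]] /= [_ Ht [_ ->]].
  + by move=> Hs; exists (a, s); rewrite mem_enum.
Qed.

Lemma uniq_words j : uniq (words j).
Proof.
elim: j => [|j IH] //=.
apply: allpairs_uniq => //; first exact: enum_uniq.
by move=> [a s] [b t] _ _ /= [-> ->].
Qed.

Lemma size_words j : size (words j) = (#|A| ^ j)%N.
Proof.
elim: j => [|j IH] //=.
by rewrite size_allpairs IH -cardE expnS.
Qed.

Lemma sum_words (R : nmodType) a b (F : seq A -> R) :
  (\sum_(s <- words (a + b)) F s = \sum_(x <- words a) \sum_(y <- words b) F (x ++ y))%R.
Proof.
elim: a F => [|a IH] F; first by rewrite add0n big_seq1.
rewrite addSn /= !big_allpairs_dep; apply: eq_bigr => z _.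
by rewrite IH.
Qed.

Fixpoint allw (r : nat) : seq (seq A) :=
  if r is r'.+1 then allw r' ++ words r' else [::].

Lemma mem_allw r s : (s \in allw r) = (size s < r)%N.
Proof.
elim: r => [|r IH] //=.
by rewrite mem_cat IH mem_words ltnS [in RHS]leq_eqVlt orbC.
Qed.

Lemma uniq_allw r : uniq (allw r).
Proof.
elim: r => [|r IH] //=.
rewrite cat_uniq IH uniq_words /= andbT.
apply/hasPn => s; rewrite mem_words mem_allw => /eqP ->.
by rewrite ltnn.
Qed.

End Words.
Section Trials.
Variable n : nat.
Local Notation A := (alph n).

Definition ext (x : seq A) : nat -> A := fun i => nth ord0 x i.

Lemma pref_eq (w w' : nat -> A) j :
  (forall i, (i < j)%N -> w i = w' i) -> pref w j = pref w' j.
Proof.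
move=> H; rewrite /pref /mkseq; apply/eq_in_map => i.
by rewrite mem_iota add0n => /andP[_ /H].
Qed.

Lemma pref_ext (x : seq A) j : (j <= size x)%N -> pref (ext x) j = take j x.
Proof. by move=> hj; rewrite /pref /mkseq /ext map_nth_iota0. Qed.

Lemma size_pref (w : nat -> A) j : size (pref w j) = j.
Proof. by rewrite /pref size_mkseq. Qed.

Lemma take_pref (w : nat -> A) i j : (i <= j)%N -> take i (pref w j) = pref w i.
Proof.
move=> hij; rewrite /pref /mkseq -map_take take_iota.
by rewrite (minn_idPl hij).
Qed.

Variables N k : nat.

Lemma R1_w (eta : seq A -> bool) (w w' : nat -> A) l :
  (forall i, (i <= l)%N -> w i = w' i) ->
  (R1 eta w N k l <-> R1 eta w' N k l) /\ (R2 w N l <-> R2 w' N l).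
Proof.
move=> H.
have E1 : pref w l = pref w' l by apply: pref_eq => i /ltnW; apply: H.
have E2 : pref w (l - N) = pref w' (l - N).
  by apply: pref_eq => i hi; apply: H; apply: leq_trans (ltnW hi) (leq_subr _ _).
rewrite /R1 /R2 /in_union E1 E2 (H (l - N)) ?leq_subr //.
Qed.

Lemma R1_eta (eta eta' : seq A -> bool) (w : nat -> A) l :
  (N <= l)%N -> (forall v, (size v < l + N + k)%N -> eta v = eta' v) ->
  R1 eta w N k l -> R1 eta' w N k l.
Proof.
move=> hN H [H1 H2]; split.
- move=> v hv; rewrite -H; first exact: H1.
  case: hv => /andP[_ h] _; apply: leq_trans h _.
  by rewrite -addnA leq_add2l leq_addl.
- move=> v hv hv'; rewrite -H; first exact: H2.
  case: hv => /andP[_ h] _; apply: leq_trans h _.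
  lia.
Qed.

Definition Vset (z : seq A) := [seq z ++ s | s <- allw n (2 * N + k)].
Definition pat (w : nat -> A) l (v : seq A) :=
  [&& (l <= size v)%N, (size v < l + k)%N & take l v == pref w l].

Lemma uniq_Vset z : uniq (Vset z).
Proof.
rewrite map_inj_uniq ?uniq_allw //.
by move=> s t /eqP; rewrite eqseq_cat // eqxx /= => /eqP.
Qed.

Lemma mem_Vset z v : (v \in Vset z) = (size z <= size v)%N && (size v < size z + (2 * N + k))%N && (take (size z) v == z).
Proof.
apply/mapP/idP.
- case=> s; rewrite mem_allw => hs ->.
  by rewrite size_cat leq_addr ltn_add2l hs take_size_cat // eqxx.
- case/andP => /andP[h1 h2] /eqP h3.
  exists (drop (size z) v); last by rewrite -{1}h3 cat_take_drop.
  rewrite mem_allw size_drop.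
  by rewrite ltn_subLR // addnC.
Qed.

Lemma R1_cyl (eta : seq A -> bool) (w : nat -> A) l :
  (N <= l)%N ->
  (R1 eta w N k l <-> forall v, v \in Vset (pref w (l - N)) -> eta v = pat w l v).
Proof.
move=> hN.
have U2 v : in_union w (l - N) (2 * N + k) v <-> v \in Vset (pref w (l - N)).
  rewrite /in_union mem_Vset size_pref; split.
  - by case=> -> /eqP ->; rewrite andbT.
  - by case/andP => -> /eqP.
have U1 v : in_union w l k v <-> pat w l v.
  rewrite /in_union /pat; split.
  - by case=> /andP[-> ->] /eqP ->.
  - by case/and3P => -> -> /eqP.
have U12 v : in_union w l k v -> in_union w (l - N) (2 * N + k) v.
  case=> /andP[h1 h2] h3; split; last by rewrite -(take_takel _ (leq_subr N l)) h3 take_pref ?leq_subr.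
  apply/andP; split; first by apply: leq_trans (leq_subr _ _) h1.
  by apply: leq_trans h2 _; lia.
split.
- case=> H1 H2 v hv.
  case hp: (pat w l v).
  + by apply: H1; apply/U1.
  + by apply: H2; [apply/U2 | move/U1; rewrite hp].
- move=> H; split.
  + by move=> v hv; rewrite H; [apply/U1 | apply/U2; apply: U12].
  + move=> v hv hv'; rewrite H; last by apply/U2.
    by apply/negbTE/negP => /U1.
Qed.

End Trials.
Section MuPart.
Variable n : nat.
Local Notation A := (alph n).
Variable R : realType.
Variable mu : probability (choiceT n) R.
Hypothesis hmu : mu_cyl mu.
Local Open Scope ring_scope.

Definition dep (U : seq (seq A)) (P : (seq A -> bool) -> Prop) :=
  forall e1 e2 : seq A -> bool, (forall u, u \in U -> e1 u = e2 u) -> P e1 -> P e2.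

Definition upd (e : seq A -> bool) u b : seq A -> bool :=
  fun v => if v == u then b else e v.

Lemma gen_meas u b : measurable [set e : choiceT n | e u = b].
Proof. by apply: sub_sigma_algebra; exists u, b. Qed.

Lemma split_set (P : (seq A -> bool) -> Prop) u (X : set (choiceT n)) :
  [set e : choiceT n | P e] `&` X =
  ([set e : choiceT n | P (upd e u true)] `&` ([set e : choiceT n | e u = true] `&` X)) `|`
  ([set e : choiceT n | P (upd e u false)] `&` ([set e : choiceT n | e u = false] `&` X)).
Proof.
have Hu (e : seq A -> bool) : upd e u (e u) = e.
  by apply: funext => v; rewrite /upd; case: eqP => // ->.
apply/seteqP; split => e /=.
- case=> Pe Xe; case E: (e u).
  + by left; split => //; rewrite -E Hu.
  + by right; split => //; rewrite -E Hu.
- case=> [[Pe [Eu Xe]]|[Pe [Eu Xe]]]; split => //; by rewrite -(Hu e) Eu.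
Qed.

Lemma dep_upd {U P u} b : dep (u :: U) P -> dep U (fun e => P (upd e u b)).
Proof.
move=> H e1 e2 He; apply: H => v; rewrite in_cons /upd.
by case: eqP => //= _; apply: He.
Qed.

Lemma dep_meas U P : dep U P -> measurable [set e : choiceT n | P e].
Proof.
elim: U P => [|u U IH] P HP.
  case: (pselect (exists e, P e)) => [[e0 He0]|no].
    rewrite (_ : [set e | P e] = setT); first exact: measurableT.
    by apply/seteqP; split => // e _; apply: (HP e0).
  rewrite (_ : [set e | P e] = set0); first exact: measurable0.
  by apply/seteqP; split => // e Pe; apply: no; exists e.
rewrite -[X in measurable X]setIT (split_set _ u).
apply: measurableU; apply: measurableI; (try apply: measurableI);
  try exact: measurableT; try exact: gen_meas; apply: IH; exact: dep_upd.
Qed.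

Definition pr (X : set (choiceT n)) : R := fine (mu X).

Lemma muE {X} : measurable X -> mu X = (pr X)%:E.
Proof. by move=> mX; rewrite /pr fineK // fin_num_measure. Qed.

Lemma prU X Y : measurable X -> measurable Y -> X `&` Y = set0 -> pr (X `|` Y) = pr X + pr Y.
Proof.
move=> mX mY XY; rewrite /pr measureU // fineD //; exact: fin_num_measure.
Qed.

Definition Bset (W : seq (seq A)) (c : seq A -> bool) :=
  [set e : choiceT n | forall u, u \in W -> e u = c u].

Lemma dep_Bset W c : dep W (fun e => forall u, u \in W -> e u = c u).
Proof. by move=> e1 e2 H H1 u hu; rewrite -H // H1. Qed.

Lemma Bset_meas W c : measurable (Bset W c).
Proof. by apply: dep_meas; apply: dep_Bset. Qed.

Lemma pr_Bset W c : uniq W -> pr (Bset W c) = (2^-1) ^+ size W.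
Proof. by move=> hW; rewrite /pr /Bset hmu. Qed.


Lemma Bset_cons u W c b : u \notin W ->
  [set e : choiceT n | e u = b] `&` Bset W c = Bset (u :: W) (upd c u b).
Proof.
move=> uW; apply/seteqP; split => e /=.
- by case=> Eu HH v; rewrite in_cons /upd; case: eqP => [->|_] //= /HH.
- move=> HH; split; first by rewrite HH ?mem_head // /upd eqxx.
  move=> v hv; rewrite HH ?in_cons ?hv ?orbT // /upd.
  by case: eqP => // E; rewrite -E hv in uW.
Qed.

Lemma pr_setT : pr setT = 1.
Proof. by rewrite /pr probability_setT. Qed.

Lemma pr_set0 : pr set0 = 0.
Proof. by rewrite /pr measure0. Qed.

Lemma indep U : uniq U -> forall P, dep U P -> forall W c, uniq W ->
  (forall v, v \in W -> v \notin U) ->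
  pr ([set e : choiceT n | P e] `&` Bset W c) = 2^-1 ^+ size W * pr [set e : choiceT n | P e].
Proof.
elim: U => [|u U IH] hU P HP W c hW hWU.
  case: (pselect (exists e, P e)) => [[e0 He0]|no].
    rewrite (_ : [set e | P e] = setT); last first.
      by apply/seteqP; split => // e _; apply: (HP e0).
    by rewrite setTI pr_Bset // pr_setT mulr1.
  rewrite (_ : [set e | P e] = set0); last first.
    by apply/seteqP; split => // e Pe; apply: no; exists e.
  by rewrite set0I pr_set0 mulr0.
move: hU => /= /andP[uU hU].
set Pt := [set e : choiceT n | P (upd e u true)].
set Pf := [set e : choiceT n | P (upd e u false)].
have mPt : measurable Pt by rewrite /Pt; apply: dep_meas; exact: (dep_upd true HP).
have mPf : measurable Pf by rewrite /Pf; apply: dep_meas; exact: (dep_upd false HP).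
have key W' c' : uniq W' -> (forall v, v \in W' -> v \notin u :: U) ->
    pr ([set e : choiceT n | P e] `&` Bset W' c') = 2^-1 ^+ (size W').+1 * (pr Pt + pr Pf).
  move=> hW' hW'U.
  have uW' : u \notin W'.
    by apply/negP => /hW'U; rewrite mem_head.
  rewrite (split_set P u) prU; first last.
  - apply/seteqP; split => // e /= [[_ [E1 _]] [_ [E2 _]]].
    by rewrite E1 in E2.
  - by apply: measurableI => //; apply: measurableI; [exact: gen_meas | exact: Bset_meas].
  - by apply: measurableI => //; apply: measurableI; [exact: gen_meas | exact: Bset_meas].
  have hUW : forall v, v \in u :: W' -> v \notin U.
    move=> v; rewrite in_cons => /orP[/eqP -> //| /hW'U].
    by rewrite in_cons negb_or => /andP[].
  have uqW : uniq (u :: W') by rewrite /= uW' hW'.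
  rewrite !Bset_cons // !IH //; try exact: (dep_upd _ HP).
  by rewrite -mulrDr.
rewrite key //.
have -> : [set e : choiceT n | P e] = [set e : choiceT n | P e] `&` Bset [::] c.
  by rewrite (_ : Bset [::] c = setT) ?setIT //; apply/seteqP; split.
rewrite key //=.
by rewrite exprSr expr1 mulrA.
Qed.

End MuPart.
Section NuPart.
Variable n : nat.
Local Notation A := (alph n).
Variable R : realType.
Variable nu : probability (wordsT n) R.
Hypothesis hnu : nu_cyl nu.
Local Open Scope ring_scope.

Definition cyl (x : seq A) := [set w : wordsT n | pref w (size x) = x].

Lemma cyl_meas x : measurable (cyl x).
Proof. by apply: sub_sigma_algebra; exists x. Qed.

Lemma nu_sel_gen L (S : pred (seq A)) (s : seq (seq A)) :
  uniq s -> all (fun x => size x == L) s ->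
  measurable [set w : wordsT n | pref w L \in s /\ S (pref w L)] /\
  nu [set w : wordsT n | pref w L \in s /\ S (pref w L)] =
    (\sum_(x <- s) (S x)%:R * ((5 * n - 6)%:R : R) ^- L)%:E.
Proof.
elim: s => [|x s IH] /=.
  rewrite big_nil (_ : [set w | _] = set0) ?measure0 //.
  by apply/seteqP; split => // w [].
case/andP => xs us /andP[/eqP sx als].
case: (IH us als) => m1 e1.
rewrite big_cons.
case Sx: (S x).
- have -> : [set w : wordsT n | pref w L \in x :: s /\ S (pref w L)] =
      cyl x `|` [set w : wordsT n | pref w L \in s /\ S (pref w L)].
    apply/seteqP; split => w /=.
    + rewrite in_cons => -[/orP[/eqP E|hs] Hs]; first by left; rewrite /cyl /= sx.
      by right.
    + case=> [|[hs Hs]]; last by rewrite in_cons hs orbT.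
      by rewrite /cyl /= sx => ->; rewrite mem_head.
  split; first by apply: measurableU => //; exact: cyl_meas.
  rewrite measureU //; first last.
  + apply/seteqP; split => // w /= []; rewrite /cyl /= sx => -> [].
    by rewrite (negbTE xs).
  + exact: cyl_meas.
  have hc : nu (cyl x) = (((5 * n - 6)%:R : R) ^- L)%:E by rewrite -sx; exact: hnu.
  by rewrite mul1r EFinD -e1 -hc.
- have -> : [set w : wordsT n | pref w L \in x :: s /\ S (pref w L)] =
      [set w : wordsT n | pref w L \in s /\ S (pref w L)].
    apply/seteqP; split => w /=.
    + rewrite in_cons => -[/orP[/eqP E|hs] Hs]; last by [].
      by rewrite E Sx in Hs.
    + by case=> hs Hs; rewrite in_cons hs orbT.
  by split => //; rewrite mul0r add0r -e1.
Qed.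

Lemma nu_sel L (S : pred (seq A)) :
  measurable [set w : wordsT n | S (pref w L)] /\
  nu [set w : wordsT n | S (pref w L)] =
    (\sum_(x <- words n L) (S x)%:R * ((5 * n - 6)%:R : R) ^- L)%:E.
Proof.
have -> : [set w : wordsT n | S (pref w L)] =
    [set w : wordsT n | pref w L \in words n L /\ S (pref w L)].
  apply/seteqP; split => w /=; last by case.
  by move=> Sw; rewrite mem_words size_pref.
apply: nu_sel_gen; first exact: uniq_words.
by apply/allP => x; rewrite mem_words.
Qed.

End NuPart.



Section Main.
Variable n : nat.
Local Notation A := (alph n).
Variable R : realType.
Variable mu : probability (choiceT n) R.
Hypothesis hmu : mu_cyl mu.
Variables N k : nat.
Local Open Scope ring_scope.

Definition D := (2 * N + k).+1.
Definition Tr (e : seq A -> bool) (w : nat -> A) t :=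
  R1 e w N k (t * D + N) /\ R2 w N (t * D + N).
Definition Aset (x : seq A) m :=
  [set e : choiceT n | forall t, (t < m)%N -> ~ Tr e (ext n x) t].
Local Notation pr := (@pr n R mu).
Definition cc : R := (5 * n - 6)%:R.
Definition Phi m := \sum_(x <- words n (m * D)) cc ^- (m * D) * pr (Aset x m).
Definition pp : R := 2^-1 ^+ size (allw n (2 * N + k)).

Lemma hND : (N + N + k < D)%N.
Proof. by rewrite /D; lia. Qed.

Lemma ltmD {t m} : (t < m)%N -> (t * D + D <= m * D)%N.
Proof. by move=> ht; rewrite -mulSnr leq_mul2r ht orbT. Qed.

Lemma Tr_dep w t r : (t * D + N + N + k <= r)%N -> dep n (allw n r) (fun e => Tr e w t).
Proof.
move=> hr e1 e2 H [H1 H2]; split => //; move: H1; apply: R1_eta; first exact: leq_addl.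
by move=> v hv; apply: H; rewrite mem_allw; apply: leq_trans hv hr.
Qed.

Lemma Aset_dep x m : dep n (allw n (m * D)) (fun e => forall t, (t < m)%N -> ~ Tr e (ext n x) t).
Proof.
move=> e1 e2 H H1 t ht HT; apply: (H1 t ht).
have hr : (t * D + N + N + k <= m * D)%N.
  by have := ltmD ht; have := hND; lia.
exact: (@Tr_dep (ext n x) t (m * D) hr e2 e1 (fun u hu => esym (H u hu)) HT).
Qed.

Lemma Aset_meas x m : measurable (Aset x m).
Proof. by rewrite /Aset; apply: dep_meas; apply: Aset_dep. Qed.

Lemma T_meas w t : measurable [set e : choiceT n | Tr e w t].
Proof. by apply: dep_meas; apply: (@Tr_dep w t _ (leqnn _)). Qed.

Lemma Tr_cat e x y t m : size x = (m * D)%N -> (t < m)%N ->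
  (Tr e (ext n (x ++ y)) t <-> Tr e (ext n x) t).
Proof.
move=> sx ht.
have hag : forall i, (i <= t * D + N)%N -> ext n (x ++ y) i = ext n x i.
  move=> i hi; rewrite /ext nth_cat sx.
  have := ltmD ht; have := hND => h h'.
  have -> : (i < m * D)%N by lia.
  done.
have [h1 h2] := @R1_w n N k e _ _ _ hag.
by rewrite /Tr h1 h2.
Qed.

Lemma Aset_cat x y m : size x = (m * D)%N -> Aset (x ++ y) m = Aset x m.
Proof.
move=> sx; apply/seteqP; split => e /= H t ht HT; apply: (H t ht).
- by apply/(@Tr_cat e x y t m sx ht).
- by apply/(@Tr_cat e x y t m sx ht).
Qed.

Lemma Aset_S x y m : size x = (m * D)%N ->
  Aset (x ++ y) m.+1 = Aset x m `&` ~` [set e : choiceT n | Tr e (ext n (x ++ y)) m].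
Proof.
move=> sx; rewrite -(@Aset_cat x y m sx); apply/seteqP; split => e /=.
- move=> H; split; last by apply: H.
  by move=> t ht; apply: H; apply: ltnW.
- case=> H1 H2 t; rewrite ltnS leq_eqVlt => /orP[/eqP ->|] //.
  exact: H1.
Qed.


Lemma pr_step x y m : size x = (m * D)%N ->
  pr (Aset (x ++ y) m.+1) =
  pr (Aset x m) * (1 - (4 * n - 4 < letter_val (nth ord0 y 0))%N%:R * pp).
Proof.
move=> sx.
set T := [set e : choiceT n | Tr e (ext n (x ++ y)) m].
have mA := Aset_meas x m.
have mT : measurable T by apply: T_meas.
have mAT : measurable (Aset x m `&` T) by apply: measurableI.
have mAnT : measurable (Aset x m `&` ~` T) by apply: measurableI => //; apply: measurableC.
have hsplit : pr (Aset x m) = pr (Aset x m `&` T) + pr (Aset x m `&` ~` T).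
  rewrite -(@prU n R mu _ _ mAT mAnT); first by rewrite -setDE setUIDK.
  by apply/seteqP; split => // e /= [[_ h] [_ h']].
rewrite (@Aset_S x y m sx) -/T.
have E : ext n (x ++ y) (m * D + N - N) = nth ord0 y 0.
  by rewrite addnK /ext nth_cat sx ltnn subnn.
case G: (4 * n - 4 < letter_val (nth ord0 y 0))%N.
- have ET : T = Bset n (Vset n N k x) (pat n k (ext n (x ++ y)) (m * D + N)).
    apply/seteqP; split => e /=.
    + case=> H1 _; move: H1; rewrite R1_cyl ?leq_addl // addnK pref_ext; last first.
        by rewrite size_cat sx leq_addr.
      by rewrite take_size_cat.
    + move=> H; split; last by rewrite /R2 E G.
      rewrite R1_cyl ?leq_addl // addnK pref_ext; last by rewrite size_cat sx leq_addr.
      by rewrite take_size_cat.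
  have hdisj : forall v, v \in Vset n N k x -> v \notin allw n (m * D).
    move=> v; rewrite mem_Vset mem_allw sx -leqNgt.
    by case/andP => /andP[].
  have hi := @indep n R mu hmu (allw n (m * D)) (uniq_allw n _) _ (Aset_dep x m)
    (Vset n N k x) (pat n k (ext n (x ++ y)) (m * D + N)) (uniq_Vset n N k x) hdisj.
  move: hsplit; rewrite ET hi /pp size_map mul1r -/(Aset x m) => hs.
  apply: (addrI (2^-1 ^+ size (allw n (2 * N + k)) * pr (Aset x m))).
  rewrite -hs; ring.
- have ET : T = set0.
    apply/seteqP; split => // e /= [_].
    by rewrite /R2 E G.
  by rewrite ET setC0 setIT mul0r subr0 mulr1.
Qed.


Lemma sum_const_seq (T : Type) (r : seq T) (c : R) : \sum_(s <- r) c = c *+ size r.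
Proof. by elim: r => [|a r IH]; rewrite ?big_nil ?big_cons ?IH ?mulrS. Qed.

Hypothesis n4 : (4 <= n)%N.

Lemma cc_card : cc = #|A|%:R.
Proof. by rewrite card_ord /cc; congr (_%:R); lia. Qed.

Lemma cc_gt0 : 0 < cc.
Proof. by rewrite /cc ltr0n; lia. Qed.

Lemma pp_ge0 : 0 <= pp.
Proof. by rewrite /pp exprn_ge0 // invr_ge0 ler0n. Qed.

Lemma pp_le1 : pp <= 1.
Proof. by rewrite /pp exprn_ile1 // ?invr_ge0 ?ler0n // invf_le1 // ler1n. Qed.

Lemma sum_F : \sum_(a <- enum A) (1 - (4 * n - 4 < letter_val a)%N%:R * pp) <= cc - pp.
Proof.
rewrite big_enum /= (bigD1 ord_max) //=.
have g : (4 * n - 4 < letter_val (ord_max : A))%N by rewrite /letter_val /=; lia.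
rewrite g mul1r.
have h1 : \sum_(i : A | i != ord_max) (1 - (4 * n - 4 < letter_val i)%N%:R * pp)
    <= \sum_(i : A | i != ord_max) (1 : R).
  apply: ler_sum => i _; rewrite lerBlDr lerDl.
  by apply: mulr_ge0 => //; exact: pp_ge0.
have h2 : \sum_(i : A) (1 : R) = 1 + \sum_(i : A | i != ord_max) (1 : R).
  by rewrite (bigD1 ord_max).
have h3 : \sum_(i : A) (1 : R) = cc by rewrite sumr_const cc_card.
lra.
Qed.

Lemma Phi_step m : Phi m.+1 <= (1 - pp / cc) * Phi m.
Proof.
rewrite /Phi (mulSnr m D) sum_words mulr_sumr big_seq [X in _ <= X]big_seq.
apply: ler_sum => x hx.
have sx : size x = (m * D)%N by move: hx; rewrite mem_words => /eqP.
have -> : words n D = [seq a :: s | a <- enum A, s <- words n (2 * N + k)] by [].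
rewrite big_allpairs_dep /=.
under eq_bigr => a _ do under eq_bigr => s _ do rewrite (@pr_step x (a :: s) m sx) /=.
under eq_bigr => a _ do rewrite sum_const_seq size_words.
set pA := pr (Aset x m).
set Kp := (#|A| ^ (2 * N + k))%N.
have -> : \sum_(a <- enum A) (cc ^- (m * D + D) * (pA * (1 - (4 * n - 4 < letter_val a)%N%:R * pp)) *+ Kp)
   = (cc ^- (m * D + D) * pA * Kp%:R) * \sum_(a <- enum A) (1 - (4 * n - 4 < letter_val a)%N%:R * pp).
  by rewrite mulr_sumr; apply: eq_bigr => a _; rewrite -mulr_natr; ring.
have pA0 : 0 <= pA by rewrite /pA /pr fine_ge0 // measure_ge0.
have c0 : cc != 0 by rewrite gt_eqF // cc_gt0.
apply: le_trans (ler_wpM2l _ sum_F) _.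
  by rewrite !mulr_ge0 // ?invr_ge0 ?exprn_ge0 // ltW // cc_gt0.
rewrite /Kp natrX -cc_card exprD /D exprS.
rewrite le_eqVlt; apply/orP; left; apply/eqP; field.
by apply/and3P; split; rewrite ?expf_neq0 //; exact: c0.
Qed.


Lemma Phi0 : Phi 0 = 1.
Proof.
rewrite /Phi mul0n /= big_seq1 expr0 invr1 mul1r.
rewrite (_ : Aset [::] 0 = setT) ?pr_setT //.
by apply/seteqP; split => // e _ t.
Qed.

Lemma rho_ge0 : 0 <= 1 - pp / cc.
Proof.
rewrite subr_ge0 ler_pdivrMr ?cc_gt0 // mul1r.
apply: le_trans pp_le1 _; rewrite /cc ler1n; lia.
Qed.

Lemma pp_gt0 : 0 < pp.
Proof. by rewrite /pp exprn_gt0 // invr_gt0 ltr0n. Qed.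

Lemma Phi_le m : Phi m <= (1 - pp / cc) ^+ m.
Proof.
elim: m => [|m IH]; first by rewrite Phi0 expr0.
apply: le_trans (Phi_step m) _.
by rewrite exprS ler_wpM2l // rho_ge0.
Qed.

Lemma Phi_small eps : 0 < eps -> exists m, Phi m < eps.
Proof.
move=> he.
have h : `|1 - pp / cc| < 1.
  rewrite ger0_norm ?rho_ge0 // ltrBlDr ltrDl divr_gt0 //.
    exact: pp_gt0.
  exact: cc_gt0.
have := cvgr_lt 0 (cvg_expr h) eps he.
case=> M _ HM; exists M; apply: le_lt_trans (Phi_le M) _.
by apply: HM => /=.
Qed.


Definition fm m (e : choiceT n) : \bar R :=
  (\sum_(x <- words n (m * D)) (cc ^- (m * D) * \1_(Aset x m) e)%:E)%E.

Lemma fm_ge0 m e : (0 <= fm m e)%E.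
Proof.
apply: sume_ge0 => x _; rewrite lee_fin mulr_ge0 // ?invr_ge0 ?exprn_ge0 //; try exact: ltW cc_gt0.
Qed.

Lemma fm_meas m : measurable_fun [set: choiceT n] (fm m : choiceT n -> \bar R).
Proof.
apply: emeasurable_sum => x; apply/measurable_EFinP.
apply: measurable_funM; first exact: measurable_cst.
apply: measurable_indic; exact: Aset_meas.
Qed.

Lemma int_fm m : (\int[mu]_e fm m e = (Phi m)%:E)%E.
Proof.
rewrite /fm ge0_integral_sum //; first last.
- move=> x e _; rewrite lee_fin mulr_ge0 // ?invr_ge0 ?exprn_ge0 //; try exact: ltW cc_gt0.
- move=> x; apply/measurable_EFinP.
  apply: measurable_funM; first exact: measurable_cst.
  apply: measurable_indic; exact: Aset_meas.
rewrite /Phi -sumEFin; apply: eq_bigr => x _.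
under eq_integral do rewrite EFinM.
rewrite ge0_integralZl_EFin //; first last.
- by rewrite invr_ge0 exprn_ge0 // ltW // cc_gt0.
- by apply/measurable_EFinP; apply: measurable_indic; exact: Aset_meas.
rewrite integral_indic ?setIT; last exact: Aset_meas.
rewrite EFinM /pr fineK // fin_num_measure //; exact: Aset_meas.
exact: measurableT.
Qed.

Lemma fm_set_meas m eps : measurable [set e : choiceT n | (eps%:E <= fm m e)%E].
Proof.
rewrite -[X in measurable X]setTI.
exact: (emeasurable_fun_c_infty measurableT (fm_meas m)).
Qed.

Lemma markov_fm m eps : 0 < eps ->
  pr [set e : choiceT n | (eps%:E <= fm m e)%E] <= Phi m / eps.
Proof.
move=> he.
have := @le_integral_comp_abse _ _ R mu setT measurableT (fm m) eps id
  (@measurable_id _ _ setT) (fun r h => h) (fun x _ y _ h => h) (fm_meas m) he.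
under eq_integral do rewrite /= gee0_abs ?fm_ge0 //.
rewrite int_fm /=.
have -> : setT `&` [set x | (eps%:E <= `|fm m x|)%E] = [set e : choiceT n | (eps%:E <= fm m e)%E].
  apply/seteqP; split => e /=.
  - by case=> _; rewrite gee0_abs ?fm_ge0.
  - by move=> h; split => //; rewrite gee0_abs ?fm_ge0.
rewrite (@muE n R mu _ (fm_set_meas m eps)) -EFinM lee_fin => h.
by rewrite ler_pdivlMr // mulrC.
Qed.

Variable nu : probability (wordsT n) R.
Hypothesis hnu : nu_cyl nu.

Definition G m (e : choiceT n) := [set w : wordsT n | (e \in Aset (pref w (m * D)) m)].

Lemma G_nu m e : measurable (G m e) /\ nu (G m e) = fm m e.
Proof.
have [h1 h2] := @nu_sel n R nu hnu (m * D) (fun x => e \in Aset x m).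
split => //; rewrite h2 /fm sumEFin; congr (_%:E).
by apply: eq_bigr => x _; rewrite indicE mulrC.
Qed.

Lemma bad_in_G e (w : nat -> A) :
  (forall l, (N <= l)%N -> ~ (R1 e w N k l /\ R2 w N l)) -> forall m, G m e w.
Proof.
move=> H m; rewrite /G /= in_setE => t ht HT.
apply: (H (t * D + N)); first exact: leq_addl.
have hag : forall i, (i <= t * D + N)%N -> ext n (pref w (m * D)) i = w i.
  move=> i hi; rewrite /ext /pref nth_mkseq //.
  have := ltmD ht; have := hND; lia.
have [h1 h2] := @R1_w n N k e _ _ _ hag.
by case: HT => /h1 ? /h2 ?.
Qed.

End Main.

Local Open Scope ring_scope.
Lemma geo_small (R : realType) (r eps : R) : 0 <= r -> r < 1 -> 0 < eps -> exists m, r ^+ m < eps.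
Proof.
move=> r0 r1 he.
have h : `|r| < 1 by rewrite ger0_norm.
have := cvgr_lt 0 (cvg_expr h) eps he.
by case=> M _ HM; exists M; apply: HM => /=.
Qed.




Local Close Scope ring_scope.

Theorem proposition7p1 (R : realType) (n : nat) :
  (4 <= n)%N -> ~~ odd n ->
  forall nu : probability (wordsT n) R, nu_cyl nu ->
  forall mu : probability (choiceT n) R, mu_cyl mu ->
  {ae mu, forall eta : choiceT n, is_random nu eta}.
Proof.
move=> n4 _ nu hnu mu hmu.
pose eps (j : nat) : R := (2^-1 ^+ j)%R.
have eps_gt0 j : (0 < eps j)%R by rewrite exprn_gt0 // invr_gt0.
have ex_small (x : \bar R) : (0 <= x)%E -> (forall j, (x <= (eps j)%:E)%E) -> x = 0%E.
  case: x => [r| |] //= r0 hr.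
  - have r0' : (0 <= r)%R by rewrite -lee_fin.
    congr (_%:E); apply/eqP; rewrite eq_le r0' andbT.
    rewrite leNgt; apply/negP => rpos.
    have h2 : (2^-1 < 1 :> R)%R by rewrite invf_lt1 // ltr1n.
    have [j hj] := @geo_small R 2^-1 r (ltW (eps_gt0 1%N)) h2 rpos.
    by have := hr j; rewrite lee_fin leNgt hj.
  - by have := hr 0%N.
pose Z N k j := \bigcap_m [set e : choiceT n | ((eps j)%:E <= fm n R N k m e)%E].
have Zneg N k j : mu.-negligible (Z N k j).
  exists (Z N k j); split => //.
  - by apply: bigcap_measurable; [exists 0%N | move=> m _; exact: fm_set_meas].
  - apply: ex_small; first exact: measure_ge0.
    move=> i.
    have [m hm] := @Phi_small n R mu hmu N k n4 (eps i * eps j)%R (mulr_gt0 (eps_gt0 i) (eps_gt0 j)).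
    have mZ : measurable (Z N k j).
      by apply: bigcap_measurable; [exists 0%N | move=> m' _; exact: fm_set_meas].
    have mS := fm_set_meas n R N k m (eps j).
    have sub : Z N k j `<=` [set e : choiceT n | ((eps j)%:E <= fm n R N k m e)%E].
      by move=> e /(_ m I).
    have := le_measure mu (mem_set mZ) (mem_set mS) sub => hle.
    apply: le_trans hle _.
    apply: (@le_trans _ _ (pr n R mu [set e : choiceT n | ((eps j)%:E <= fm n R N k m e)%E])%:E).
      by rewrite -(@muE n R mu _ (fm_set_meas n R N k m (eps j))); exact: lexx.
    rewrite lee_fin.
    apply: le_trans (@markov_fm n R mu N k m (eps j) (eps_gt0 j)) _.
    by rewrite ler_pdivrMr ?eps_gt0 // ltW.
apply: (negligibleS (A := \bigcup_N \bigcup_k \bigcup_j Z N k j)); last first.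
  by do 3 (apply: negligible_bigcup => ?); exact: Zneg.
move=> e /= nr.
case: (pselect ((\bigcup_N \bigcup_k \bigcup_j Z N k j) e)) => // nZ.
exfalso; apply: nr.
have small N k j : exists m, (fm n R N k m e < (eps j)%:E)%E.
  case: (pselect (exists m, (fm n R N k m e < (eps j)%:E)%E)) => // hno.
  exfalso; apply: nZ; exists N => //; exists k => //; exists j => // m _ /=.
  by rewrite leNgt; apply/negP => hlt; apply: hno; exists m.
apply: (negligibleS (A := \bigcup_N \bigcup_k \bigcap_m G n N k m e)); last first.
  apply: negligible_bigcup => N; apply: negligible_bigcup => k.
  exists (\bigcap_m G n N k m e); split => //.
  - by apply: bigcap_measurable; [exists 0%N | move=> m _; case: (@G_nu n R N k nu hnu m e)].
  - apply: ex_small; first exact: measure_ge0.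
    move=> j; have [m hm] := small N k j.
    have mH : measurable (\bigcap_m G n N k m e).
      by apply: bigcap_measurable; [exists 0%N | move=> m' _; case: (@G_nu n R N k nu hnu m' e)].
    have mG : measurable (G n N k m e) by case: (@G_nu n R N k nu hnu m e).
    have sub : \bigcap_m G n N k m e `<=` G n N k m e by move=> w /(_ m I).
    have := le_measure nu (mem_set mH) (mem_set mG) sub => hle.
    apply: le_trans hle _.
    by case: (@G_nu n R N k nu hnu m e) => _ E; rewrite -E in hm; exact: ltW hm.
move=> w /= nw.
have [N hN] : exists N, ~ (forall k, exists l, (N <= l)%N /\ R1 e w N k l /\ R2 w N l).
  by apply/existsNP => H; apply: nw => N' k'; apply: H.
have [k hk] : exists k, ~ (exists l, (N <= l)%N /\ R1 e w N k l /\ R2 w N l).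
  by apply/existsNP.
exists N => //; exists k => // m _.
apply: bad_in_G => // l hl [h1 h2]; apply: hk; exists l; split => //.
Qed.
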